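(* Let $(P_1,\dots,P_J)$ be a stochastically rationalizable stochastic demand system assigning probability zero to patches that lie on more than one budget plane, with vector representation $\pi=(\pi_{-J}',\pi_J')'$. For $k\in\{1,\dots,G\}$ and $z\ge0$ let $F_k(z)=P_J(\{y:y_k\le z\})$. Then $F_k(z)$ is bounded from below by $$\min_{\nu\in\mathbf R^H_+}\Big\{\sum_{i\in\{1,\dots,I_J\}:\ \overline d_k(i|J)\le z}e_i'A_J\nu\Big\}\quad\text{s.t. } A_{-J}\nu=\pi_{-J},$$ and from above by $$\max_{\nu\in\mathbf R^H_+}\Big\{\sum_{i\in\{1,\dots,I_J\}:\ \underline d_k(i|J)\le z}e_i'A_J\nu\Big\}\quad\text{s.t. } A_{-J}\nu=\pi_{-J},$$ where $e_i$ is the $i$-th unit vector of $\mathbf R^{I_J}$.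
   Context: Budget planes $\mathcal B_j=\{y\in\mathbf R^G_+:p_j'y=1\}$, $p_j\in\mathbf R^G_{++}$. Patches are cells of the coarsest partition of $\bigcup_j\mathcal B_j$ such that each cell is, for every $j$, entirely on, strictly above or strictly below $\mathcal B_j$; patches on more than one budget plane are dropped, $x_{1|j},\dots,x_{I_j|j}$ are the remaining patches in $\mathcal B_j$, $I=\sum_jI_j$, with fixed representatives $y^*_{i|j}\in x_{i|j}$. A demand vector $(d_1,\dots,d_J)\in\prod_j\mathcal B_j$ is rationalizable if some strictly increasing $u:\mathbf R^G_+\to\mathbf R$ has $d_j\in\arg\max_{\mathcal B_j}u$ for all $j$. A stochastic demand system $(P_1,\dots,P_J)$ ($P_j$ a probability on $\mathcal B_j$) is stochastically rationalizable if some probability on $\prod_j\mathcal B_j$ concentrated on rationalizable demand vectors has marginals $P_1,\dots,P_J$. Its vector representation $\pi\in\mathbf R^I$ has $j$-th block $(P_j(x_{1|j}),\dots,P_j(x_{I_j|j}))$. $A\in\{0,1\}^{I\times H}$ has as columns (each once) exactly the binary $I$-vectors with one $1$ per block, at position $i_j$ in block $j$, such that $(y^*_{i_1|1},\dots,y^*_{i_J|J})$ is rationalizable. $A_J,\pi_J$ denote rows/entries of block $J$ and $A_{-J},\pi_{-J}$ the rest. $\underline d_k(i|J)=\inf\{y_k:y\in x_{i|J}\}$, $\overline d_k(i|J)=\sup\{y_k:y\in x_{i|J}\}$. *)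

(* Defs.v *)
From HB Require Import structures.
From mathcomp Require Import all_boot all_order all_algebra.
From mathcomp Require Import all_classical all_reals all_analysis.
Set Implicit Arguments. Unset Strict Implicit. Unset Printing Implicit Defensive.
Import Order.TTheory GRing.Theory Num.Theory.
Local Open Scope classical_set_scope.
Local Open Scope ring_scope.

(* Bundles in R^G are G-tuples (with MathComp-Analysis' product sigma-algebra
   on tuples, i.e. the Borel sigma-algebra of R^G); demand profiles
   (d_1,...,d_J) are J-tuples of bundles (product sigma-algebra). *)

Section Defs.
Variables (R : realType) (G J : nat).
Implicit Types (y x : G.-tuple R) (p : 'I_J -> G.-tuple R).

Definition dotp (q y : G.-tuple R) : R := \sum_(g < G) tnth q g * tnth y g.

Definition nonneg y : Prop := forall g, 0 <= tnth y g.

Definition budget (q : G.-tuple R) : set (G.-tuple R) :=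
  [set y | nonneg y /\ dotp q y = 1].

Definition strictly_increasing (u : G.-tuple R -> R) : Prop :=
  forall x y, nonneg x -> nonneg y -> (forall g, tnth y g <= tnth x g) ->
    x <> y -> u y < u x.

Definition rationalizable p (d : J.-tuple (G.-tuple R)) : Prop :=
  (forall j, budget (p j) (tnth d j)) /\
  exists u, strictly_increasing u /\
    forall j y, budget (p j) y -> u y <= u (tnth d j).

Definition side (q y : G.-tuple R) : option bool :=
  if dotp q y == 1 then None else Some (1 < dotp q y).

Definition sgnvec := {ffun 'I_J -> option bool}.

(* The cells of the coarsest partition of the union of the budget planes that
   are, for every j, on / strictly above / strictly below B_j, are exactly the
   nonempty sets patch_set p s. *)
Definition patch_set p (s : sgnvec) : set (G.-tuple R) :=
  [set y | (exists j, budget (p j) y) /\ forall j, side (p j) y = s j].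

Definition patch_in p (j : 'I_J) (s : sgnvec) : Prop :=
  s j = None /\ (forall j', j' != j -> s j' != None) /\ patch_set p s !=set0.

Definition blk p (j : 'I_J) : {set sgnvec} := [set s | `[< patch_in p j s >]].

Definition multi_plane (s : sgnvec) : bool := (1 < #|[set j | s j == None]|)%N.

(* columns of A: choices of one patch per budget, c j in blk p j, such that the
   profile of representatives (rep (c 1), ..., rep (c J)) is rationalizable.
   A column c has entry 1 in row (j,s) iff c j = s. *)
Definition colT := {ffun 'I_J -> sgnvec}.

Definition rep_profile (rep : sgnvec -> G.-tuple R) (c : colT)
  : J.-tuple (G.-tuple R) := [tuple rep (c j) | j < J].

Definition cols p (rep : sgnvec -> G.-tuple R) : {set colT} :=
  [set c : colT | [forall j, c j \in blk p j] &&
           `[< rationalizable p (rep_profile rep c) >]].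

Definition Anu p rep (nu : colT -> R) (j : 'I_J) (s : sgnvec) : R :=
  \sum_(c in cols p rep | c j == s) nu c.

Definition dlow p (k : 'I_G) (s : sgnvec) : R :=
  inf [set tnth y k | y in patch_set p s].
Definition dbar p (k : 'I_G) (s : sgnvec) : R :=
  sup [set tnth y k | y in patch_set p s].

Definition stoch_rationalizable p
    (P : 'I_J -> probability (G.-tuple R) R) : Prop :=
  exists mu : probability (J.-tuple (G.-tuple R)) R,
    (exists E, measurable E /\ E `<=` rationalizable p /\ mu E = 1%E) /\
    forall j A, measurable A -> mu [set d | A (tnth d j)] = P j A.

Definition feasible p rep (P : 'I_J -> probability (G.-tuple R) R)
    (jJ : 'I_J) (nu : colT -> R) : Prop :=
  (forall c, c \in cols p rep -> 0 <= nu c) /\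
  forall j, j != jJ -> forall s, s \in blk p j ->
    (Anu p rep nu j s)%:E = P j (patch_set p s).

Definition obj_lo p rep (jJ : 'I_J) (k : 'I_G) (z : R) (nu : colT -> R) : R :=
  \sum_(s in blk p jJ | dbar p k s <= z) Anu p rep nu jJ s.

Definition obj_hi p rep (jJ : 'I_J) (k : 'I_G) (z : R) (nu : colT -> R) : R :=
  \sum_(s in blk p jJ | dlow p k s <= z) Anu p rep nu jJ s.

End Defs.

Definition last_budget (J : nat) (hJ : (0 < J)%N) : 'I_J :=
  Ordinal (etrans (ltn_predL J) hJ).

(* Main.v *)
Require Import Defs.
From HB Require Import structures.
From mathcomp Require Import all_boot all_order all_algebra.
From mathcomp Require Import all_classical all_reals all_analysis.
From mathcomp Require Import measurable_realfun.
Import Order.TTheory GRing.Theory Num.Theory.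
Local Open Scope classical_set_scope.
Local Open Scope ring_scope.

Section MinMax.
Variable R : realType.

Lemma bigmin_le_seq (I : eqType) (s : seq I) (P : pred I) (F : I -> R) d i :
  i \in s -> P i -> \big[Num.min/d]_(j <- s | P j) F j <= F i.
Proof.
elim: s => // a s IH; rewrite inE big_cons => /orP [/eqP <- | /IH H] Pi.
  by rewrite Pi ge_min lexx.
case: ifP => _; last exact: H.
by rewrite ge_min (H Pi) orbT.
Qed.

Lemma bigmin_le (I : finType) (P : pred I) (F : I -> R) d i :
  P i -> \big[Num.min/d]_(j | P j) F j <= F i.
Proof. by apply: bigmin_le_seq; rewrite mem_index_enum. Qed.

Lemma bigmin_gt (I : finType) (P : pred I) (F : I -> R) d m :
  m < d -> (forall i, P i -> m < F i) -> m < \big[Num.min/d]_(j | P j) F j.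
Proof.
move=> md mF; apply: (big_ind (fun v => m < v)) => //.
by move=> x y mx my; rewrite lt_min mx my.
Qed.

Lemma bigmin_ge (I : finType) (P : pred I) (F : I -> R) d m :
  m <= d -> (forall i, P i -> m <= F i) -> m <= \big[Num.min/d]_(j | P j) F j.
Proof.
move=> md mF; apply: (big_ind (fun v => m <= v)) => //.
by move=> x y mx my; rewrite le_min mx my.
Qed.

Lemma bigmax_ge_seq (I : eqType) (s : seq I) (P : pred I) (F : I -> R) d i :
  i \in s -> P i -> F i <= \big[Num.max/d]_(j <- s | P j) F j.
Proof.
elim: s => // a s IH; rewrite inE big_cons => /orP [/eqP <- | /IH H] Pi.
  by rewrite Pi le_max lexx.
case: ifP => _; last exact: H.
by rewrite le_max (H Pi) orbT.
Qed.

Lemma bigmax_ge (I : finType) (P : pred I) (F : I -> R) d i :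
  P i -> F i <= \big[Num.max/d]_(j | P j) F j.
Proof. by apply: bigmax_ge_seq; rewrite mem_index_enum. Qed.

Lemma bigmax_ge_idx (I : finType) (P : pred I) (F : I -> R) d :
  d <= \big[Num.max/d]_(j | P j) F j.
Proof.
elim/big_rec: _ => // i x _ h.
by rewrite le_max h orbT.
Qed.
End MinMax.
Arguments bigmin_le {R I P F d} i.
Arguments bigmax_ge {R I P F d} i.
Arguments bigmin_gt {R I P F d m}.
Arguments bigmin_ge {R I P F d m}.
Arguments bigmax_ge_idx {R I P F d}.

Section Det.
Variables (R : realType) (G J : nat).
Variable (p : 'I_J -> G.-tuple R).
Hypothesis hp : forall j g, 0 < tnth (p j) g.

Lemma dotp_ge0 (q y : G.-tuple R) : (forall g, 0 <= tnth q g) -> nonneg y -> 0 <= dotp q y.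
Proof. by move=> hq hy; apply: sumr_ge0 => g _; apply: mulr_ge0. Qed.

Lemma coord_le (q y : G.-tuple R) k : (forall g, 0 <= tnth q g) -> nonneg y ->
  tnth q k * tnth y k <= dotp q y.
Proof.
move=> hq hy; rewrite /dotp (bigD1 k) //= lerDl.
by apply: sumr_ge0 => g _; apply: mulr_ge0.
Qed.

Lemma dotp_lt (q x y : G.-tuple R) : (forall g, 0 < tnth q g) ->
  (forall g, tnth y g <= tnth x g) -> x <> y -> dotp q y < dotp q x.
Proof.
move=> hq hle hne.
have [g hg] : exists g, tnth y g != tnth x g.
  apply/not_existsP => H; apply: hne; apply: eq_from_tnth => g.
  by move: (H g) => /negP; rewrite negbK => /eqP ->.
rewrite /dotp (bigD1 g) //= [X in _ < X](bigD1 g) //=.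
apply: ltr_leD.
  by rewrite ltr_pM2l // lt_neqAle hg hle.
by apply: ler_sum => i _; rewrite ler_pM2l.
Qed.

Lemma side_cases (q y : G.-tuple R) :
  [\/ side q y = None /\ dotp q y = 1,
      side q y = Some true /\ 1 < dotp q y |
      side q y = Some false /\ dotp q y < 1].
Proof.
rewrite /side; case: eqP => [->|/eqP ne]; first by apply: Or31.
case: ltgtP ne => // h _; [by apply: Or32 | by apply: Or33].
Qed.

Lemma side_None (q y : G.-tuple R) : side q y = None -> dotp q y = 1.
Proof. by rewrite /side; case: eqP. Qed.

Lemma side_true (q y : G.-tuple R) : side q y = Some true -> 1 < dotp q y.
Proof. by case: (side_cases q y) => -[-> h]. Qed.

Lemma side_false (q y : G.-tuple R) : side q y = Some false -> dotp q y < 1.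
Proof. by case: (side_cases q y) => -[-> h]. Qed.


Lemma exists_coord (q y : G.-tuple R) : dotp q y = 1 -> exists g0 : 'I_G, True.
Proof.
move=> h; case: (pselect (exists g0 : 'I_G, True)) => // /forallNP H.
move: h; rewrite /dotp big1 => [/esym/eqP|g _]; first by rewrite oner_eq0.
by case: (H g).
Qed.

Lemma transfer (hJ : (0 < J)%N) (d d' : J.-tuple (G.-tuple R)) :
  rationalizable p d -> (forall j, nonneg (tnth d' j)) ->
  (forall i j, side (p i) (tnth d' j) = side (p i) (tnth d j)) ->
  rationalizable p d'.
Proof.
case=> hbud [u [hu hopt]] hnn hside.
have hp0 : forall i g, 0 <= tnth (p i) g by move=> i g; exact: ltW.
have hb' : forall j, budget (p j) (tnth d' j).
  move=> j; split => //; apply: side_None; rewrite hside.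
  by rewrite /side (hbud j).2 eqxx.
pose U j := u (tnth d j).
have R1 : forall i j, dotp (p i) (tnth d j) = 1 -> U j <= U i.
  by move=> i j h; apply: hopt; split => //; exact: (hbud j).1.
have R2 : forall i j, dotp (p i) (tnth d j) < 1 -> U j < U i.
  move=> i j h.
  have [g0 _] := exists_coord _ _ (hbud i).2.
  pose t := (1 - dotp (p i) (tnth d j)) / tnth (p i) g0.
  have t0 : 0 < t by apply: divr_gt0; [rewrite subr_gt0 | exact: hp].
  pose y := [tuple tnth (tnth d j) g + (if g == g0 then t else 0) | g < G].
  have ty : forall g, tnth y g = tnth (tnth d j) g + (if g == g0 then t else 0).
    by move=> g; rewrite tnth_mktuple.
  have hny : nonneg y.
    move=> g; rewrite ty; apply: addr_ge0; first exact: (hbud j).1.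
    by case: ifP => _ //; exact: ltW.
  have hyb : budget (p i) y.
    split => //; rewrite /dotp.
    under eq_bigr do rewrite ty mulrDr.
    rewrite big_split /= [X in _ + X](bigD1 g0) //=.
    rewrite eqxx [X in _ * _ + X]big1; last by move=> g gn; rewrite (negbTE gn) mulr0.
    have -> : \sum_(k < G) tnth (p i) k * tnth (tnth d j) k = dotp (p i) (tnth d j) by [].
    rewrite addr0 /t mulrCA divff ?mulr1; first by rewrite addrC subrK.
    by rewrite gt_eqF // hp.
  apply: (lt_le_trans _ (hopt i y hyb)); apply: hu => //.
  - exact: (hbud j).1.
  - by move=> g; rewrite ty lerDl; case: ifP => _ //; exact: ltW.
  - move=> /(congr1 (fun v => tnth v g0)); rewrite ty eqxx => /eqP.
    by rewrite -subr_eq0 addrC addKr gt_eqF.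
pose t' i j := dotp (p i) (tnth d' j) - 1.
pose dl := \big[Num.min/1]_(ij : 'I_J * 'I_J)
   (if U ij.2 < U ij.1 then U ij.1 - U ij.2 else 1).
have dl0 : 0 < dl.
  apply: bigmin_gt => // -[i j] _ /=; case: ifP => //; by rewrite subr_gt0.
have dlle : forall i j, U j < U i -> dl <= U i - U j.
  move=> i j h; apply: le_trans (bigmin_le (i, j) isT) _ => /=.
  by rewrite h.
pose K := 1 + \big[Num.max/0]_(ij : 'I_J * 'I_J)
   (if 0 < t' ij.1 ij.2 then `|U ij.2 - U ij.1| / t' ij.1 ij.2 else 0).
have K0 : 0 < K.
  by apply: (lt_le_trans ltr01); rewrite lerDl; exact: bigmax_ge_idx.
have Kge : forall i j, 0 < t' i j -> U j - U i <= K * t' i j.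
  move=> i j h; apply: (le_trans (ler_norm _)).
  have hb := bigmax_ge (P := predT) (d := 0) (F := fun ij : 'I_J * 'I_J =>
    if 0 < t' ij.1 ij.2 then `|U ij.2 - U ij.1| / t' ij.1 ij.2 else 0) (i, j) isT.
  rewrite /= h in hb.
  have e : `|U j - U i| = (`|U j - U i| / t' i j) * t' i j by rewrite divfK // gt_eqF.
  rewrite e ler_pM2r //; apply: (le_trans hb).
  by rewrite /K lerDr.
pose phi t := if 0 < t then K * t else dl * t.
have phi_lt : forall a b, a < b -> phi a < phi b.
  move=> a b ab; rewrite /phi; case: ifP => a0; case: ifP => b0.
  - by rewrite ltr_pM2l.
  - by move: (lt_trans a0 ab); rewrite b0.
  - apply: (le_lt_trans (y := 0)); last exact: mulr_gt0.
    by rewrite pmulr_rle0 // leNgt a0.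
  - by rewrite ltr_pM2l.
have phi0 : phi 0 = 0 by rewrite /phi ltxx mulr0.
pose f i y := U i + phi (dotp (p i) y - 1).
pose i0 := Ordinal hJ.
pose u' y := \big[Num.min/f i0 y]_(i < J) f i y.
split => //; exists u'; split.
  move=> x y hx hy hle hne.
  have fl : forall i, f i y < f i x.
    by move=> i; rewrite /f ltrD2l; apply: phi_lt; rewrite ltrD2r; exact: dotp_lt.
  apply: bigmin_gt => [|i _].
    exact: (le_lt_trans (bigmin_le i0 isT)).
  exact: (le_lt_trans (bigmin_le i isT)).
move=> j y hy.
have ge : forall i, U j <= f i (tnth d' j).
  move=> i; rewrite /f; case: (side_cases (p i) (tnth d' j)) => -[hs hd].
  - rewrite hd subrr phi0 addr0; apply: R1.
    by apply: side_None; rewrite -hside.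
  - have tp : 0 < t' i j by rewrite /t' subr_gt0.
    rewrite /phi -/(t' i j) tp -lerBlDl; exact: Kge.
  - have dlt : dotp (p i) (tnth d j) < 1 by apply: side_false; rewrite -hside.
    have Ul := R2 i j dlt.
    have tn : ~~ (0 < t' i j) by rewrite /t' subr_gt0 -leNgt ltW.
    rewrite /phi -/(t' i j) (negbTE tn).
    have t1 : -1 <= t' i j.
      by rewrite /t' lerBrDr addrC subrr; apply: dotp_ge0.
    apply: (le_trans (y := U i - dl)); first by rewrite lerBrDr -lerBrDl dlle.
    rewrite lerD2l -mulrN1 ler_pM2l //.
apply: (le_trans (bigmin_le j isT)).
have -> : f j y = U j by rewrite /f hy.2 subrr phi0 addr0.
exact: bigmin_ge.
Qed.

End Det.
Section Meas.
Context (dd : measure_display) (T : measurableType dd).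

Lemma m_forall_seq (I : eqType) (s : seq I) (F : I -> set T) :
  (forall i, measurable (F i)) -> measurable [set x | forall i, i \in s -> F i x].
Proof.
move=> mF; elim: s => [|a s IH].
  by rewrite (_ : [set x | _] = setT) //; apply/seteqP; split => x //= _ i.
rewrite (_ : [set x | _] = F a `&` [set x | forall i, i \in s -> F i x]).
  exact: measurableI.
apply/seteqP; split => x /=.
  by move=> h; split => [|i hs]; apply: h; rewrite inE ?eqxx ?hs ?orbT.
by move=> [h1 h2] i; rewrite inE => /orP [/eqP -> //|]; exact: h2.
Qed.

Lemma m_forall (I : finType) (F : I -> set T) :
  (forall i, measurable (F i)) -> measurable [set x | forall i, F i x].
Proof.
move=> mF; rewrite (_ : [set x | _] = [set x | forall i, i \in index_enum I -> F i x]).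
  exact: m_forall_seq.
apply/seteqP; split => x /= h i; first by move=> _; exact: h.
by apply: h; rewrite mem_index_enum.
Qed.

Lemma m_exists_seq (I : eqType) (s : seq I) (F : I -> set T) :
  (forall i, measurable (F i)) -> measurable [set x | exists i, i \in s /\ F i x].
Proof.
move=> mF; elim: s => [|a s IH].
  by rewrite (_ : [set x | _] = set0) //; apply/seteqP; split => x //= [i []].
rewrite (_ : [set x | _] = F a `|` [set x | exists i, i \in s /\ F i x]).
  exact: measurableU.
apply/seteqP; split => x /=.
  move=> [i [+ h]]; rewrite inE => /orP [/eqP <-|hs]; first by left.
  by right; exists i.
case=> [h|[i [hs h]]]; first by exists a; rewrite inE eqxx.
by exists i; rewrite inE hs orbT.
Qed.

Lemma m_exists (I : finType) (F : I -> set T) :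
  (forall i, measurable (F i)) -> measurable [set x | exists i, F i x].
Proof.
move=> mF; rewrite (_ : [set x | _] = [set x | exists i, i \in index_enum I /\ F i x]).
  exact: m_exists_seq.
apply/seteqP; split => x /= [i h]; exists i => //; last by case: h.
by rewrite mem_index_enum.
Qed.

Variable (R : realType) (mu : {measure set T -> \bar R}).

Lemma null_U_seq (I : eqType) (s : seq I) (F : I -> set T) :
  (forall i, measurable (F i)) -> (forall i, mu (F i) = 0%E) ->
  mu [set x | exists i, i \in s /\ F i x] = 0%E.
Proof.
move=> mF F0; elim: s => [|a s IH].
  by rewrite (_ : [set x | _] = set0) ?measure0 //; apply/seteqP; split => x //= [i []].
rewrite (_ : [set x | _] = F a `|` [set x | exists i, i \in s /\ F i x]).
  by apply: null_set_setU => //; exact: m_exists_seq.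
apply/seteqP; split => x /=.
  move=> [i [+ h]]; rewrite inE => /orP [/eqP <-|hs]; first by left.
  by right; exists i.
case=> [h|[i [hs h]]]; first by exists a; rewrite inE eqxx.
by exists i; rewrite inE hs orbT.
Qed.

Lemma null_U (I : finType) (F : I -> set T) :
  (forall i, measurable (F i)) -> (forall i, mu (F i) = 0%E) ->
  mu [set x | exists i, F i x] = 0%E.
Proof.
move=> mF F0; rewrite (_ : [set x | _] = [set x | exists i, i \in index_enum I /\ F i x]).
  exact: null_U_seq.
apply/seteqP; split => x /= [i h]; exists i => //; last by case: h.
by rewrite mem_index_enum.
Qed.

Lemma add_seq (I : eqType) (s : seq I) (P : pred I) (F : I -> set T) :
  uniq s -> (forall i, measurable (F i)) ->
  (forall i j x, F i x -> F j x -> i = j) ->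
  mu [set x | exists i, [/\ i \in s, P i & F i x]] = (\sum_(i <- s | P i) mu (F i))%E.
Proof.
move=> + mF dF; elim: s => [|a s IH].
  by rewrite big_nil (_ : [set x | _] = set0) ?measure0 //; apply/seteqP; split => x //= [i []].
rewrite cons_uniq => /andP [nas us]; rewrite big_cons.
have mS : measurable [set x | exists i, [/\ i \in s, P i & F i x]].
  rewrite (_ : [set x | _] = [set x | exists i, i \in s /\ (if P i then F i else set0) x]).
    by apply: m_exists_seq => i; case: (P i) => //; exact: measurable0.
  apply/seteqP; split => x /= [i h]; exists i.
    by case: h => h1 h2 h3; rewrite h2.
  by case: h => h1; case: ifP.
case: ifP => Pa.
  rewrite (_ : [set x | _] = F a `|` [set x | exists i, [/\ i \in s, P i & F i x]]).
    rewrite measureU //; first by congr (_ + _)%E; exact: IH.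
    apply/seteqP; split => x //= [h [i [hs _ h']]].
    by move: nas; rewrite (dF _ _ _ h h') hs.
  apply/seteqP; split => x /=.
    move=> [i [+ Pi h]]; rewrite inE => /orP [/eqP <-|hs]; first by left.
    by right; exists i.
  case=> [h|[i [hs Pi h]]]; first by exists a; rewrite inE eqxx.
  by exists i; rewrite inE hs orbT.
rewrite -IH //; congr (mu _); apply/seteqP; split => x /=.
  move=> [i [+ Pi h]]; rewrite inE => /orP [/eqP ei|hs]; last by exists i.
  by move: Pa; rewrite -ei Pi.
by move=> [i [hs Pi h]]; exists i; rewrite inE hs orbT.
Qed.

Lemma add_fin (I : finType) (P : pred I) (F : I -> set T) :
  (forall i, measurable (F i)) ->
  (forall i j x, F i x -> F j x -> i = j) ->
  mu [set x | exists i, P i /\ F i x] = (\sum_(i | P i) mu (F i))%E.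
Proof.
move=> mF dF; rewrite -add_seq ?index_enum_uniq //; congr (mu _).
apply/seteqP; split => x /= [i h]; exists i.
  by case: h; rewrite mem_index_enum.
by case: h.
Qed.

End Meas.
Arguments m_forall {dd T I} F.
Arguments m_exists {dd T I} F.
Arguments null_U {dd T R} mu {I} F.
Arguments add_fin {dd T R} mu {I} P F.
Section MeasR.
Variables (R : realType) (G : nat).

Lemma mpre (dd : measure_display) (T : measurableType dd) (f : T -> R) (i : interval R) :
  measurable_fun setT f -> measurable (f @^-1` [set` i]).
Proof. by move=> mf; rewrite -[_ @^-1` _]setTI; apply: mf => //; exact: measurable_itv. Qed.

Lemma mdotp (q : G.-tuple R) : measurable_fun [set: G.-tuple R] (dotp q).
Proof.
rewrite /dotp.
have : forall s : seq 'I_G, measurable_fun [set: G.-tuple R]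
    (fun y => \sum_(g <- s) tnth q g * tnth y g).
  elim=> [|a s IH].
    under eq_fun do rewrite big_nil. exact: measurable_cst.
  under eq_fun do rewrite big_cons.
  apply: measurable_funD => //; apply: measurable_funM => //.
  exact: measurable_tnth.
by move=> /(_ (index_enum _)).
Qed.

Lemma m_dotp_eq (q : G.-tuple R) c : measurable [set y | dotp q y = c].
Proof.
rewrite (_ : [set y | _] = dotp q @^-1` [set` `[c, c]]); first by apply: mpre; exact: mdotp.
apply/seteqP; split => y /=; rewrite in_itv /=; first by move=> ->; rewrite lexx.
by move=> h; apply/eqP; rewrite eq_le andbC.
Qed.

Lemma m_dotp_gt (q : G.-tuple R) : measurable [set y | 1 < dotp q y].
Proof.
rewrite (_ : [set y | _] = dotp q @^-1` [set` `]1, +oo[]); first by apply: mpre; exact: mdotp.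
by apply/seteqP; split => y /=; rewrite in_itv /= andbT.
Qed.

Lemma m_dotp_lt (q : G.-tuple R) : measurable [set y | dotp q y < 1].
Proof.
rewrite (_ : [set y | _] = dotp q @^-1` [set` `]-oo, 1[]); first by apply: mpre; exact: mdotp.
by apply/seteqP; split => y /=; rewrite in_itv /=.
Qed.

Lemma m_coord_le (k : 'I_G) (z : R) : measurable [set y : G.-tuple R | tnth y k <= z].
Proof.
rewrite (_ : [set y | _] = (fun y => tnth y k) @^-1` [set` `]-oo, z]]).
  by apply: mpre; exact: measurable_tnth.
by apply/seteqP; split => y /=; rewrite in_itv /=.
Qed.

Lemma m_nonneg : measurable [set y : G.-tuple R | nonneg y].
Proof.
apply: (m_forall (fun g => [set y : G.-tuple R | 0 <= tnth y g])) => g.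
rewrite (_ : [set y | _] = (fun y => tnth y g) @^-1` [set` `[0, +oo[]).
  by apply: mpre; exact: measurable_tnth.
by apply/seteqP; split => y /=; rewrite in_itv /= andbT.
Qed.

Lemma m_budget (q : G.-tuple R) : measurable (budget q).
Proof. exact: measurableI (m_nonneg) (m_dotp_eq q 1). Qed.

Lemma m_side (q : G.-tuple R) o : measurable [set y | side q y = o].
Proof.
case: o => [[]|].
- rewrite (_ : [set y | _] = [set y | 1 < dotp q y]); first exact: m_dotp_gt.
  apply/seteqP; split => y /=; first exact: side_true.
  by move=> h; rewrite /side gt_eqF // h.
- rewrite (_ : [set y | _] = [set y | dotp q y < 1]); first exact: m_dotp_lt.
  apply/seteqP; split => y /=; first exact: side_false.
  by move=> h; rewrite /side lt_eqF // ltNge (ltW h).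
- rewrite (_ : [set y | _] = [set y | dotp q y = 1]); first exact: m_dotp_eq.
  apply/seteqP; split => y /=; first exact: side_None.
  by move=> h; rewrite /side h eqxx.
Qed.

Lemma m_patch J (p : 'I_J -> G.-tuple R) s : measurable (patch_set p s).
Proof.
apply: measurableI.
  by apply: (m_exists (fun j => budget (p j))) => j; exact: m_budget.
by apply: (m_forall (fun j => [set y | side (p j) y = s j])) => j; exact: m_side.
Qed.

Lemma m_tup J (A : set (G.-tuple R)) (j : 'I_J) : measurable A ->
  measurable [set d : J.-tuple (G.-tuple R) | A (tnth d j)].
Proof.
move=> mA; rewrite -[X in measurable X]setTI.
exact: (measurable_tnth j measurableT mA).
Qed.

End MeasR.

Theorem corollary3 (R : realType) (G J : nat) (hJ : (0 < J)%N)
  (p : 'I_J -> G.-tuple R) (hp : forall j g, 0 < tnth (p j) g)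
  (rep : sgnvec J -> G.-tuple R)
  (hrep : forall j s, s \in blk p j -> patch_set p s (rep s))
  (P : 'I_J -> probability (G.-tuple R) R)
  (hPB : forall j, P j (budget (p j)) = 1%E)
  (hSR : stoch_rationalizable p P)
  (hmulti : forall j s, multi_plane s -> P j (patch_set p s) = 0%E)
  (k : 'I_G) (z : R) (hz : 0 <= z) :
  (ereal_inf [set (obj_lo p rep (last_budget hJ) k z nu)%:E
                | nu in feasible p rep P (last_budget hJ)]
     <= P (last_budget hJ) [set y | (tnth y k <= z)%R])%E /\
  (P (last_budget hJ) [set y | (tnth y k <= z)%R]
     <= ereal_sup [set (obj_hi p rep (last_budget hJ) k z nu)%:E
                | nu in feasible p rep P (last_budget hJ)])%E.
Proof.
set jJ := last_budget hJ.
have hp0 : forall i g, 0 <= tnth (p i) g by move=> i g; exact: ltW.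
pose sv (y : G.-tuple R) : sgnvec J := [ffun i => side (p i) y].
have F1 : forall s y, patch_set p s y -> sv y = s.
  by move=> s y [_ h]; apply/ffunP => i; rewrite ffunE h.
have F2 : forall j y, budget (p j) y -> patch_set p (sv y) y.
  by move=> j y hy; split; [exists j | move=> i; rewrite ffunE].
have Fnn : forall s y, patch_set p s y -> nonneg y.
  by move=> s y [[j [hj _]] _].
have Fdisj : forall s t y, patch_set p s y -> patch_set p t y -> s = t.
  by move=> s t y hs ht; rewrite -(F1 _ _ hs) -(F1 _ _ ht).
pose Fm (t : sgnvec J) := if multi_plane t then patch_set p t else set0.
pose M := [set y | exists t, Fm t y].
have mFm : forall t, measurable (Fm t).
  by move=> t; rewrite /Fm; case: ifP => _; [exact: m_patch | exact: measurable0].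
have mM : measurable M by exact: (m_exists Fm).
have PM0 : forall j, P j M = 0%E.
  move=> j; apply: (null_U (P j) Fm) => // t; rewrite /Fm.
  by case: ifP => h; [exact: hmulti | exact: measure0].
have good : forall j y, budget (p j) y -> ~ M y -> sv y \in blk p j.
  move=> j y hy nM; rewrite inE asboolE; split; first by rewrite ffunE /side hy.2 eqxx.
  split; last by exists y; exact: F2 hy.
  move=> j' nj; apply/eqP => h; apply: nM; exists (sv y); rewrite /Fm ifT; first exact: F2 hy.
  rewrite /multi_plane; apply: (@leq_trans #|[set j; j']%SET|); first by rewrite cards2 eq_sym nj.
  apply: subset_leq_card; apply/fintype.subsetP => i; rewrite !inE => /orP [/eqP->|/eqP->].
    by rewrite /= ffunE /side hy.2 eqxx.
  by rewrite /= h.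
case: hSR => mu [[E [mE [ER muE]]] hmarg].
pose Dc (c : colT J) := [set d : J.-tuple (G.-tuple R) | forall j, patch_set p (c j) (tnth d j)].
have mDc : forall c, measurable (Dc c).
  move=> c; apply: (m_forall (fun j => [set d : J.-tuple (G.-tuple R) | patch_set p (c j) (tnth d j)])) => j.
  by apply: m_tup; exact: m_patch.
have finmu : forall A, measurable A -> mu A \is a fin_num.
  move=> A mA; rewrite ge0_fin_numE ?measure_ge0 //.
  by apply: (le_lt_trans (probability_le1 mu mA)); exact: ltey.
pose nu (c : colT J) := fine (mu (Dc c)).
have disjDc : forall c c' d, Dc c d -> Dc c' d -> c = c'.
  by move=> c c' d h h'; apply/ffunP => j; exact: Fdisj (h j) (h' j).
have mMi : forall i, measurable [set d : J.-tuple (G.-tuple R) | M (tnth d i)].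
  by move=> i; exact: m_tup.
pose N := ~` E `|` [set d : J.-tuple (G.-tuple R) | exists i, M (tnth d i)].
have mN : measurable N.
  apply: measurableU; first exact: measurableC.
  exact: (m_exists (fun i => [set d : J.-tuple (G.-tuple R) | M (tnth d i)])).
have muN : mu N = 0%E.
  apply: null_set_setU.
  - exact: measurableC.
  - exact: (m_exists (fun i => [set d : J.-tuple (G.-tuple R) | M (tnth d i)])).
  - by have := probability_setC mu mE; rewrite muE subee.
  - apply: (null_U mu (fun i => [set d : J.-tuple (G.-tuple R) | M (tnth d i)])) => // i.
    by have := hmarg i M mM; rewrite PM0.
have KC : forall j s, s \in blk p j -> (Anu p rep nu j s)%:E = P j (patch_set p s).
  move=> j s hs.
  pose Q := fun c : colT J => (c \in cols p rep) && (c j == s).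
  pose U := [set d | exists c, Q c /\ Dc c d].
  pose X := [set d : J.-tuple (G.-tuple R) | patch_set p s (tnth d j)].
  have mU : measurable U.
    rewrite (_ : U = [set d | exists c, (if Q c then Dc c else set0) d]).
      apply: (m_exists (fun c => if Q c then Dc c else set0)) => c.
      by case: ifP => _; [exact: mDc | exact: measurable0].
    apply/seteqP; split => d /= [c h]; exists c; first by case: h => -> .
    by move: h; case: ifP.
  have mX : measurable X by apply: m_tup; exact: m_patch.
  have e1 : (Anu p rep nu j s)%:E = mu U.
    rewrite /Anu EFin_sum_fine; last by move=> c _; exact: finmu.
    by rewrite (add_fin mu Q Dc).
  rewrite e1 -(hmarg j _ (m_patch R G J p s)) -/X.
  apply/eqP; rewrite eq_le; apply/andP; split.
    apply: le_measure; rewrite ?inE //.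
    by move=> d [c [/andP [_ /eqP cs] h]]; rewrite /X /= -cs; exact: h j.
  rewrite -(measureU0 mU mN muN).
  apply: le_measure; rewrite ?inE //; first exact: measurableU.
  move=> d Xd; case: (pselect (E d)) => Ed; last by right; left.
  case: (pselect (exists i, M (tnth d i))) => hM; first by right; right.
  left.
  have nM : forall i, ~ M (tnth d i) by move=> i Mi; apply: hM; exists i.
  have rd := ER d Ed.
  have hbud := rd.1.
  pose c : colT J := [ffun i => sv (tnth d i)].
  have cblk : forall i, c i \in blk p i.
    by move=> i; rewrite ffunE; apply: good (hbud i) (nM i).
  exists c; split; last by move=> i; rewrite ffunE; exact: F2 (hbud i).
  apply/andP; split; last by rewrite ffunE (F1 _ _ Xd).
  rewrite inE; apply/andP; split; first by apply/forallP.
  apply/asboolP; apply: (@transfer R G J p hp hJ d _ rd).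
    by move=> i; rewrite /rep_profile tnth_mktuple; exact: Fnn (hrep _ _ (cblk i)).
  move=> i j0; rewrite /rep_profile tnth_mktuple.
  have [_ h] := hrep _ _ (cblk j0).
  by rewrite h ffunE ffunE.
have feas : feasible p rep P jJ nu.
  split; first by move=> c _; apply: fine_ge0; exact: measure_ge0.
  by move=> j _ s hs; exact: KC.
have mEx : forall (Qs : pred (sgnvec J)),
    measurable [set y | exists s, Qs s /\ patch_set p s y].
  move=> Qs.
  rewrite (_ : [set y | _] = [set y | exists s, (if Qs s then patch_set p s else set0) y]).
    apply: (m_exists (fun s => if Qs s then patch_set p s else set0)) => t.
    by case: ifP => _; [exact: m_patch | exact: measurable0].
  apply/seteqP; split => d /= [c h]; exists c; first by case: h => -> .
  by move: h; case: ifP.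
have objE : forall (Qs : pred (sgnvec J)),
  (\sum_(s in blk p jJ | Qs s) Anu p rep nu jJ s)%:E =
   P jJ [set y | exists s, ((s \in blk p jJ) && Qs s) /\ patch_set p s y].
  move=> Qs; rewrite -sumEFin.
  rewrite (eq_bigr (fun s => P jJ (patch_set p s))); last first.
    by move=> s /andP [hs _]; exact: KC.
  by rewrite (add_fin (P jJ) (fun s => (s \in blk p jJ) && Qs s) (patch_set p)
    (fun s => m_patch R G J p s) Fdisj).
pose bnd := \sum_(i < J) (tnth (p i) k)^-1.
have ubd : forall s y, patch_set p s y -> tnth y k <= bnd.
  move=> s y hy; have [[j [hn hd]] _] := hy.
  have h1 := @coord_le R G (p j) y k (hp0 j) hn; rewrite hd in h1.
  apply: (@le_trans _ _ (tnth (p j) k)^-1).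
    by rewrite -[X in _ <= X]mulr1 ler_pdivlMl.
  rewrite /bnd (bigD1 j) //= lerDl; apply: sumr_ge0 => i _.
  by rewrite invr_ge0.
have Yme : measurable [set y : G.-tuple R | tnth y k <= z] by exact: m_coord_le.
split.
  have Slo : [set (obj_lo p rep jJ k z nu0)%:E | nu0 in feasible p rep P jJ]
     (obj_lo p rep jJ k z nu)%:E by exists nu.
  have hinf := ereal_inf_lbound Slo.
  apply: (le_trans hinf).
  rewrite /obj_lo objE; apply: le_measure; rewrite ?inE //.
  move=> y [s [/andP [hs hz'] hy]] /=; apply: le_trans hz'.
  have hsup : has_sup [set tnth y0 k | y0 in patch_set p s].
    split; first by exists (tnth y k); exists y.
    by exists bnd => _ [y' hy' <-]; exact: ubd hy'.
  by apply: sup_upper_bound hsup _ _; exists y.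
have Shi : [set (obj_hi p rep jJ k z nu0)%:E | nu0 in feasible p rep P jJ]
   (obj_hi p rep jJ k z nu)%:E by exists nu.
apply: (le_trans _ (ereal_sup_ubound Shi)).
rewrite /obj_hi objE.
set Y' := [set y | exists s, _ /\ _].
have mY' : measurable Y' by exact: mEx.
have mBc : measurable (~` budget (p jJ)) by apply: measurableC; exact: m_budget.
have n0 : P jJ (M `|` ~` budget (p jJ)) = 0%E.
  apply: null_set_setU; [exact: mM | exact: mBc | exact: PM0 | ].
  by have := probability_setC (P jJ) (m_budget R G (p jJ)); rewrite hPB subee.
have mMB : measurable (M `|` ~` budget (p jJ)) by exact: measurableU.
rewrite -(measureU0 mY' mMB n0).
apply: le_measure; rewrite ?inE //; first by apply: measurableU => //; exact: measurableU.
move=> y Yy; case: (pselect (budget (p jJ) y)) => hb; last by right; right.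
case: (pselect (M y)) => hM; first by right; left.
left; exists (sv y); split; last exact: F2 hb.
apply/andP; split; first exact: good.
have hl : has_lbound [set tnth y0 k | y0 in patch_set p (sv y)].
  by exists 0 => _ [y' hy' <-]; exact: Fnn hy' k.
apply: le_trans Yy; apply: ge_inf hl _ _.
by exists y => //; exact: F2 hb.
Qed.
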